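(* Let $L\in\mathbb{R}^{n\times n}$ be the Laplacian of an undirected unweighted graph on $n$ nodes, let $s \in \mathbb{R}^n$ be a mean-zero innate opinion vector and $z = (I+L)^{-1}s$. Let $u\neq v$ be two nodes not joined by an edge, let $E = \chi_{u,v}\chi_{u,v}^T$ be the edge Laplacian of $(u,v)$, and let $\delta = z(u)-z(v)$. Then $$PD(L) - \delta^2 \le PD(L+E) \le PD(L) - \frac{\delta^2}{3}.$$
   Context: $\chi_{u,v}\in\mathbb{R}^n$ is the vector with $1$ in coordinate $u$, $-1$ in coordinate $v$ and $0$ elsewhere. Friedkin–Johnsen model: expressed opinions $z=(I+L)^{-1}s$. With $s$ fixed, the polarization+disagreement of a graph with Laplacian $M$ is $PD(M) = s^T (I+M)^{-1} s$. *)

(* Defs.v *)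
From mathcomp Require Import all_boot all_order all_algebra.
Set Implicit Arguments. Unset Strict Implicit. Unset Printing Implicit Defensive.
Import Order.TTheory GRing.Theory Num.Theory.
Local Open Scope ring_scope.

Definition simple_graph (n : nat) (adj : rel 'I_n) : Prop :=
  symmetric adj /\ irreflexive adj.

Definition gdeg (R : ringType) (n : nat) (adj : rel 'I_n) (i : 'I_n) : R :=
  (#|[set j | adj i j]|)%:R.

Definition laplacian (R : ringType) (n : nat) (adj : rel 'I_n) : 'M[R]_n :=
  \matrix_(i, j) (if i == j then gdeg R adj i else if adj i j then -1 else 0).

Definition chi (R : ringType) (n : nat) (u v : 'I_n) : 'cV[R]_n :=
  \col_i ((i == u)%:R - (i == v)%:R).

Definition PD (R : fieldType) (n : nat) (s : 'cV[R]_n) (M : 'M[R]_n) : R :=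
  (s^T *m invmx (1%:M + M) *m s) 0 0.

Definition fj_opinions (R : fieldType) (n : nat) (s : 'cV[R]_n) (L : 'M[R]_n)
  : 'cV[R]_n := invmx (1%:M + L) *m s.

(* Main.v *)
Require Import Defs.
From mathcomp Require Import all_boot all_order all_algebra ring lra.
Set Implicit Arguments. Unset Strict Implicit. Unset Printing Implicit Defensive.
Import Order.TTheory GRing.Theory Num.Theory.
Local Open Scope ring_scope.

Lemma inj_unitmx (F : fieldType) n (A : 'M[F]_n) :
  (forall x : 'cV_n, A *m x = 0 -> x = 0) -> A \in unitmx.
Proof.
move=> H; rewrite -unitmx_tr -row_free_unit -kermx_eq0; apply/eqP.
apply/row_matrixP => i; rewrite row0.
have h1 : row i (kermx A^T) *m A^T = 0 by rewrite -row_mul mulmx_ker row0.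
have h2 : A *m (row i (kermx A^T))^T = 0 by rewrite -{1}[A]trmxK -trmx_mul h1 trmx0.
by have := congr1 trmx (H _ h2); rewrite trmxK trmx0.
Qed.

Lemma sq_eq0 (R : realFieldType) n (x : 'cV[R]_n) :
  (x^T *m x) 0 0 <= 0 -> x = 0.
Proof.
move=> h.
have e : forall i, x i 0 * x i 0 = 0.
  move=> i; apply: (@psumr_eq0P _ _ predT (fun i => x i 0 * x i 0)) => //.
    by move=> j _; rewrite -expr2 sqr_ge0.
  have hs : (x^T *m x) 0 0 = \sum_i x i 0 * x i 0.
    by rewrite mxE; apply: eq_bigr=> j _; rewrite mxE.
  apply/eqP; rewrite eq_le; apply/andP; split; first by rewrite -hs.
  by rewrite sumr_ge0 // => j _; rewrite -expr2 sqr_ge0.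
apply/matrixP => i j; rewrite (ord1 j) mxE; have := e i.
by move/eqP; rewrite mulf_eq0 orbb => /eqP.
Qed.

Lemma sum_delta (R : ringType) n (u : 'I_n) (f : 'I_n -> R) :
  \sum_i (i == u)%:R * f i = f u.
Proof.
rewrite (bigD1 u) //= eqxx mul1r big1 ?addr0 // => i /negbTE ->; by rewrite mul0r.
Qed.

Lemma deg_sum (R : ringType) n (adj : rel 'I_n) i :
  gdeg R adj i = \sum_j (adj i j)%:R.
Proof.
rewrite /gdeg -sum1dep_card natr_sum big_mkcond /=; apply: eq_bigr => j _.
by case: (adj i j).
Qed.

Lemma lap_entry (R : ringType) n (adj : rel 'I_n) i j : simple_graph adj ->
  laplacian R adj i j = (i == j)%:R * gdeg R adj i - (adj i j)%:R.
Proof.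
case=> _ irr; rewrite mxE; case: eqP => [->|_]; first by rewrite irr mul1r subr0.
by rewrite mul0r sub0r; case: (adj i j); rewrite ?oppr0.
Qed.

Lemma lap_tr (R : ringType) n (adj : rel 'I_n) : simple_graph adj ->
  (laplacian R adj)^T = laplacian R adj.
Proof.
move=> hg; apply/matrixP => i j; rewrite mxE !lap_entry //.
have [sy _] := hg; rewrite sy eq_sym; case: eqP => [->|] //.
by rewrite !mul0r.
Qed.

Lemma lap_psd (R : realFieldType) n (adj : rel 'I_n) (x : 'cV[R]_n) :
  simple_graph adj -> 0 <= (x^T *m laplacian R adj *m x) 0 0.
Proof.
move=> hg; have [sy _] := hg.
pose a i j : R := (adj i j)%:R.
pose q := \sum_i \sum_j a i j * (x i 0 * x i 0 - x i 0 * x j 0).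
have e1 : (x^T *m laplacian R adj *m x) 0 0 = q.
  rewrite mxE; under eq_bigr do rewrite mxE big_distrl /=.
  rewrite exchange_big; apply: eq_bigr => i _ /=.
  transitivity (\sum_j ((i == j)%:R * (x i 0 * gdeg R adj i * x j 0) - a i j * (x i 0 * x j 0))).
    apply: eq_bigr => j _; rewrite mxE lap_entry //; rewrite /a.
    case: (i == j); case: (adj i j); rewrite /= ?mulr1n ?mulr0n ?mul0r ?mul1r; ring.
  rewrite sumrB (eq_bigr (fun j => (j == i)%:R * (x i 0 * gdeg R adj i * x j 0))); last first.
    by move=> j _; rewrite eq_sym.
  rewrite sum_delta deg_sum.
  rewrite [RHS](eq_bigr (fun j => a i j * (x i 0 * x i 0) - a i j * (x i 0 * x j 0))); last by move=> j _; rewrite mulrBr.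
  rewrite sumrB -big_distrl /=; congr (_ - _).
  by rewrite /a; ring.
have e2 : q = \sum_i \sum_j a i j * (x j 0 * x j 0 - x j 0 * x i 0).
  rewrite /q exchange_big; apply: eq_bigr => i _; apply: eq_bigr => j _.
  by rewrite /a sy.
have e3 : q + q = \sum_i \sum_j a i j * (x i 0 - x j 0) ^+ 2.
  rewrite {2}e2 -big_split; apply: eq_bigr => i _; rewrite -big_split.
  by apply: eq_bigr => j _ /=; ring.
have : 0 <= q + q.
  rewrite e3 sumr_ge0 // => i _; rewrite sumr_ge0 // => j _.
  by rewrite mulr_ge0 ?ler0n ?sqr_ge0.
by rewrite e1 -mulr2n pmulrn_lge0.
Qed.

Definition dot (R : ringType) n (x y : 'cV[R]_n) : R := (x^T *m y) 0 0.

Lemma dotC (R : comRingType) n (x y : 'cV[R]_n) : dot x y = dot y x.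
Proof. by rewrite /dot -[y^T *m x]trmxK trmx_mul trmxK [RHS]mxE. Qed.

Lemma dotDl (R : ringType) n (x y w : 'cV[R]_n) : dot (x + y) w = dot x w + dot y w.
Proof. by rewrite /dot linearD /= mulmxDl mxE. Qed.

Lemma dotDr (R : ringType) n (x y w : 'cV[R]_n) : dot w (x + y) = dot w x + dot w y.
Proof. by rewrite /dot mulmxDr mxE. Qed.

Lemma dot_ge0 (R : realFieldType) n (x : 'cV[R]_n) : 0 <= dot x x.
Proof.
rewrite /dot mxE sumr_ge0 // => i _; by rewrite mxE -expr2 sqr_ge0.
Qed.

Lemma mx11_mul (R : ringType) (A B : 'M[R]_1) : (A *m B) 0 0 = A 0 0 * B 0 0.
Proof. by rewrite mxE big_ord1. Qed.

Lemma chi_dot (R : ringType) n (u v : 'I_n) (x : 'cV[R]_n) :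
  dot (chi R u v) x = x u 0 - x v 0.
Proof.
rewrite /dot mxE (eq_bigr (fun i => (i == u)%:R * x i 0 - (i == v)%:R * x i 0)).
  by rewrite sumrB !sum_delta.
by move=> i _; rewrite !mxE mulrBl.
Qed.

Lemma chi_dot2 (R : ringType) n (u v : 'I_n) : u != v ->
  dot (chi R u v) (chi R u v) = 2%:R.
Proof.
move=> huv; rewrite chi_dot !mxE !eqxx (negbTE huv) eq_sym (negbTE huv).
by rewrite mulr1n mulr0n subr0 sub0r opprK.
Qed.

Lemma dotZr (R : comRingType) n (a : R) (x y : 'cV[R]_n) : dot x (a *: y) = a * dot x y.
Proof. by rewrite /dot -scalemxAr mxE. Qed.

Theorem mainTheorem4 (R : realFieldType) (n : nat) (adj : rel 'I_n)
  (s : 'cV[R]_n) (u v : 'I_n) :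
  simple_graph adj ->
  \sum_(i < n) s i 0 = 0 ->
  u != v -> ~~ adj u v ->
  let L := laplacian R adj in
  let E := chi R u v *m (chi R u v)^T in
  let z := fj_opinions s L in
  let delta := z u 0 - z v 0 in
  PD s L - delta ^+ 2 <= PD s (L + E) <= PD s L - delta ^+ 2 / 3%:R.
Proof.
move=> hg _ huv _; cbv zeta.
set L := laplacian R adj; set E := chi R u v *m (chi R u v)^T.
set z := fj_opinions s L; set delta := z u 0 - z v 0.
pose M := 1%:M + L; pose c := chi R u v.
have psd : forall x : 'cV_n, 0 <= dot x (L *m x).
  by move=> x; rewrite /dot mulmxA; apply: lap_psd.
have LT : L^T = L := lap_tr _ hg.
have MT : M^T = M by rewrite /M linearD /= tr_scalar_mx LT.
have MxE : forall x : 'cV_n, M *m x = x + L *m x.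
  by move=> x; rewrite /M mulmxDl mul1mx.
have Mu : M \in unitmx.
  apply: inj_unitmx => x hx; apply: sq_eq0; rewrite -/(dot x x).
  have := psd x; have : dot x (M *m x) = 0 by rewrite hx /dot mulmx0 mxE.
  rewrite MxE dotDr; lra.
have Mz : M *m z = s by rewrite /z /fj_opinions -/M mulmxA mulmxV // mul1mx.
pose w := invmx M *m c.
have Mw : M *m w = c by rewrite /w mulmxA mulmxV // mul1mx.
have cz : dot c z = delta by rewrite chi_dot.
have sw : dot s w = delta.
  by rewrite -cz (dotC c z) -Mz /dot trmx_mul MT -mulmxA Mw.
pose r := dot c w.
pose y := L *m w.
have cE : c = w + y by rewrite -Mw MxE.
have r0 : 0 <= r.
  rewrite /r cE dotDl; have := dot_ge0 w; have := psd w; rewrite dotC -/y; lra.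
have r2 : r <= 2%:R.
  have := chi_dot2 R huv; rewrite -/c.
  rewrite /r {1 2 3}cE !dotDl !dotDr (dotC y w).
  have := dot_ge0 y; have := psd w; rewrite -/y; lra.
pose N := M + c *m c^T.
have NxE : forall x : 'cV_n, N *m x = M *m x + dot c x *: c.
  by move=> x; rewrite /N mulmxDl -mulmxA [c^T *m x]mx11_scalar mul_mx_scalar.
have Nu : N \in unitmx.
  apply: inj_unitmx => x hx; apply: sq_eq0; rewrite -/(dot x x).
  have : dot x (N *m x) = 0 by rewrite hx /dot mulmx0 mxE.
  rewrite NxE dotDr MxE dotDr dotZr (dotC x c).
  have := psd x; have := sqr_ge0 (dot c x); rewrite expr2; nra.
pose al := delta / (1 + r).
have hal : al * (1 + r) = delta by rewrite /al divfK // gt_eqF // ltr_wpDr.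
have Ny : N *m (z - al *: w) = s.
  rewrite mulmxBr -scalemxAr.
 rewrite !NxE Mz Mw cz -/r.
  apply/matrixP => i j; rewrite !mxE; rewrite -hal; ring.
have PDE : PD s (L + E) = dot s z - al * delta.
  rewrite /PD addrA -/M -/c -/N -mulmxA -{2}Ny mulKmx // mulmxBr -scalemxAr.
  have e : forall A B : 'M[R]_1, (A - al *: B) 0 0 = A 0 0 - al * B 0 0.
    by move=> A B; rewrite !mxE.
  by rewrite e -/(dot s z) -/(dot s w) sw.
have PDL : PD s L = dot s z by rewrite /PD -mulmxA.
rewrite PDE PDL -hal.
have h0 : 0 <= al ^+ 2 by apply: sqr_ge0.
have h1 : 0 <= al ^+ 2 * (1 + r) * r by apply: mulr_ge0 => //; apply: mulr_ge0 => //; lra.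
have h2 : 0 <= al ^+ 2 * (1 + r) * (2%:R - r) by apply: mulr_ge0; [apply: mulr_ge0 => //; lra | lra].
have -> : (al * (1 + r)) ^+ 2 = al ^+ 2 * (1 + r) * (1 + r) by ring.
have -> : al * (al * (1 + r)) = al ^+ 2 * (1 + r) by ring.
move: h1 h2; set t := al ^+ 2 * (1 + r) => h1 h2.
apply/andP; split; nra.
Qed.
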